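(* Let $M$ be a matroid, let $S,T$ be disjoint subsets of $E(M)$, let $k:=\kappa_M(S,T)$, and let $F\subseteq E(M)-(S\cup T)$ be a set of elements none of which is flexible with respect to $(S,T)$. Let $t:=|F|$. Then there exist an ordering $(f_1,\dots,f_t)$ of $F$ and a sequence $(A_1,\dots,A_t)$ of subsets of $E(M)$ such that: (1) for each $i\in\{1,\dots,t\}$, $S\subseteq A_i\subseteq E(M)-T$ and $\lambda_M(A_i)=k$; (2) $A_i\subseteq A_{i+1}$ for each $i\in\{1,\dots,t-1\}$; (3) $A_i\cap F=\{f_1,\dots,f_i\}$ for each $i\in\{1,\dots,t\}$; (4) for each $i$, $f_i\in \mathrm{cl}_M(A_i-f_i)\cap\mathrm{cl}_M(E(M)-A_i)$ or $f_i\in\mathrm{cl}^*_M(A_i-f_i)\cap\mathrm{cl}^*_M(E(M)-A_i)$.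
   Context: For a matroid $M$ with ground set $E$, $\lambda_M(X):=r_M(X)+r_M(E-X)-r(M)$, and for disjoint $S,T\subseteq E$, $\kappa_M(S,T):=\min\{\lambda_M(X):S\subseteq X\subseteq E-T\}$. $\mathrm{cl}_M$ is the closure operator and $\mathrm{cl}^*_M$ the closure operator of the dual matroid $M^*$. For $e\in E-(S\cup T)$: $e$ is deletable with respect to $(S,T)$ if $\kappa_{M\setminus e}(S,T)=\kappa_M(S,T)$; contractible with respect to $(S,T)$ if $\kappa_{M/e}(S,T)=\kappa_M(S,T)$; flexible with respect to $(S,T)$ if it is both deletable and contractible. *)

(* Defs.v *)
From mathcomp Require Import all_boot.
Set Implicit Arguments. Unset Strict Implicit. Unset Printing Implicit Defensive.

(* A matroid on ground set E (a subset of a finType U), given by its rank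
   function r; only the values of r on subsets of E matter.
   Standard rank axioms (R1)-(R3). *)
Definition is_matroid (U : finType) (E : {set U}) (r : {set U} -> nat) : Prop :=
  [/\ (forall X : {set U}, X \subset E -> r X <= #|X|),
      (forall X Y : {set U}, X \subset Y -> Y \subset E -> r X <= r Y) &
      (forall X Y : {set U}, X \subset E -> Y \subset E ->
         r (X :|: Y) + r (X :&: Y) <= r X + r Y)].

Section MatroidDefs.
Variables (U : finType) (E : {set U}) (r : {set U} -> nat).

(* lambda_M(X) = r(X) + r(E-X) - r(M)  (never truncated for a matroid) *)
Definition lambda (X : {set U}) : nat := r X + r (E :\: X) - r E.

(* kappa_M(S,T) = min { lambda_M(X) : S ⊆ X ⊆ E - T }
   (the seed lambda S is itself a candidate when S ⊆ E, S ∩ T = ∅) *)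
Definition kappa (S T : {set U}) : nat :=
  \big[minn/lambda S]_(X : {set U} | (S \subset X) && (X \subset E :\: T)) lambda X.

Definition cl (X : {set U}) : {set U} := [set x in E | r (x |: X) == r X].

Definition rdual (X : {set U}) : nat := #|X| + r (E :\: X) - r E.

Definition cldual (X : {set U}) : {set U} :=
  [set x in E | rdual (x |: X) == rdual X].
End MatroidDefs.

(* deletion M \ e : ground set E - e, same rank *)
(* contraction M / e : ground set E - e, rank X |-> r(X ∪ e) - r({e}) *)
Definition con_rank (U : finType) (r : {set U} -> nat) (e : U) : {set U} -> nat :=
  fun X => r (e |: X) - r [set e].

Definition deletable (U : finType) (E : {set U}) (r : {set U} -> nat)
  (S T : {set U}) (e : U) : Prop :=
  kappa (E :\ e) r S T = kappa E r S T.

Definition contractible (U : finType) (E : {set U}) (r : {set U} -> nat)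
  (S T : {set U}) (e : U) : Prop :=
  kappa (E :\ e) (con_rank r e) S T = kappa E r S T.

Definition flexible (U : finType) (E : {set U}) (r : {set U} -> nat)
  (S T : {set U}) (e : U) : Prop :=
  deletable E r S T e /\ contractible E r S T e.

(* Main.v *)
Require Import Defs.
From mathcomp Require Import all_boot zify.
Set Implicit Arguments. Unset Strict Implicit. Unset Printing Implicit Defensive.

Lemma r0 U (E : {set U}) r : is_matroid E r -> r set0 = 0.
Proof. case=> h1 _ _; have := h1 set0 (sub0set _); rewrite cards0; lia. Qed.

Lemma rmono U (E : {set U}) r (X Y : {set U}) : is_matroid E r -> X \subset Y -> Y \subset E -> r X <= r Y.
Proof. by case=> _ h _; apply: h. Qed.

Lemma rsub U (E : {set U}) r (X Y : {set U}) : is_matroid E r -> X \subset E -> Y \subset E ->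
  r (X :|: Y) + r (X :&: Y) <= r X + r Y.
Proof. by case=> _ _ h; apply: h. Qed.

Lemma r1 U (E : {set U}) r g : is_matroid E r -> g \in E -> r [set g] <= 1.
Proof. case=> h _ _ gE; rewrite -(cards1 g); apply: h; by rewrite sub1set. Qed.

Lemma rU1 U (E : {set U}) r (Y : {set U}) g : is_matroid E r -> Y \subset E -> g \in E ->
  r (g |: Y) <= r Y + r [set g].
Proof. move=> hM YE gE; have := rsub hM (X:=[set g]) (Y:=Y); rewrite sub1set gE => /(_ isT YE). lia. Qed.

Lemma rU1' U (E : {set U}) r (Y : {set U}) g : is_matroid E r -> Y \subset E -> g \in E ->
  r (g |: Y) <= (r Y).+1.
Proof. move=> hM YE gE; have := rU1 hM YE gE; have := r1 hM gE; lia. Qed.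

Ltac bdec z := rewrite ?inE;
  repeat match goal with H : is_true (?A \subset ?B) |- _ => move: (subsetP H z); rewrite ?inE; clear H end;
  repeat match goal with |- context [?a == ?g] => case: (eqVneq a g) => [->|?]; rewrite ?eqxx end;
  repeat match goal with H : is_true (?y \in ?A) |- context [?y \in ?A] => rewrite H end;
  repeat match goal with H : is_true (~~ (?y \in ?A)) |- context [?y \in ?A] => rewrite (negbTE H) end;
  repeat match goal with |- context [?y \in ?A] => case: (y \in A) end;
  simpl; intros; repeat match goal with H : is_true true -> is_true false |- _ => discriminate (H isT)
                              | H : is_true false |- _ => discriminate H end; done.
Ltac sdec := apply/setP; let z := fresh "z" in intro z; bdec z.
Ltac ssub := apply/subsetP; let z := fresh "z" in intro z; bdec z.

Lemma rD1 U (E : {set U}) r (B : {set U}) g : is_matroid E r -> B \subset E -> g \in B ->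
  r (B :\ g) + r E <= r B + r (E :\ g).
Proof.
move=> hM BE gB; have := rsub hM BE (subsetDl E [set g]).
have -> : B :|: (E :\ g) = E by sdec.
have -> : B :&: (E :\ g) = B :\ g by sdec.
lia.
Qed.

Lemma NT U (E : {set U}) r (X : {set U}) : is_matroid E r -> X \subset E -> r E <= r X + r (E :\: X).
Proof.
move=> hM XE; have := rsub hM XE (subsetDl E X).
have -> : X :|: (E :\: X) = E by sdec.
have -> : X :&: (E :\: X) = set0 by sdec.
rewrite (r0 hM). lia.
Qed.

Lemma bigmin_le (I : eqType) (s : seq I) (P : pred I) (F : I -> nat) a x :
  x \in s -> P x -> \big[minn/a]_(i <- s | P i) F i <= F x.
Proof.
elim: s => // y s IH; rewrite inE big_cons => /orP[/eqP->|xs] Px.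
  by rewrite Px geq_minl.
case: (P y); last exact: IH.
by apply: leq_trans (geq_minr _ _) (IH xs Px).
Qed.

Lemma kappa_le U (E : {set U}) r (S T X : {set U}) : S \subset X -> X \subset E :\: T ->
  kappa E r S T <= lambda E r X.
Proof.
move=> h1 h2; rewrite /kappa; apply: bigmin_le; first by rewrite mem_index_enum.
by rewrite h1 h2.
Qed.

Lemma kappa_att U (E : {set U}) r (S T : {set U}) : S \subset E :\: T ->
  exists X : {set U}, [/\ S \subset X, X \subset E :\: T & kappa E r S T = lambda E r X].
Proof.
move=> hS; rewrite /kappa.
apply: (big_ind (fun v => exists X : {set U}, [/\ S \subset X, X \subset E :\: T & v = lambda E r X])).
- by exists S.
- move=> x y [X [? ? ->]] [Y [? ? ->]]; case: (leqP (lambda E r X) (lambda E r Y)) => h.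
  + by exists X.
  + by exists Y.
- by move=> X /andP[? ?]; exists X.
Qed.


Definition kset U (E : {set U}) r (S T X : {set U}) : bool :=
  [&& S \subset X, X \subset E :\: T & lambda E r X == kappa E r S T].

Lemma witness U (E : {set U}) r (S T : {set U}) g :
  is_matroid E r -> S \subset E -> [disjoint S & T] -> g \in E -> g \notin S -> g \notin T ->
  ~ flexible E r S T g ->
  exists X : {set U}, [&& kset E r S T X, kset E r S T (g |: X) & g \notin X].
Proof.
move=> hM SE dST gE gS gT nf.
have hSc : S \subset E :\: T by rewrite subsetD SE dST.
have [Xs [Xs1 Xs2 Xsk]] := kappa_att r hSc.
set k := kappa E r S T in Xsk *.
have XsE : Xs \subset E by apply: subset_trans Xs2 (subsetDl _ _).
have lb : forall Y : {set U}, S \subset Y -> Y \subset E :\: T -> k <= lambda E r Y.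
  by move=> Y h1 h2; apply: kappa_le.
have ntXs := NT hM XsE.
move: Xsk; rewrite /lambda => Xsk.
have XsgS : S \subset Xs :\ g by ssub.
have XsgE : Xs :\ g \subset (E :\ g) :\: T by ssub.
have hSc' : S \subset (E :\ g) :\: T by ssub.
have rg1 := r1 hM gE.
case: (eqVneq (kappa (E :\ g) r S T) k) => hd.
  case: (eqVneq (kappa (E :\ g) (con_rank r g) S T) k) => hc.
    by case: nf; split.
  set k' := kappa (E :\ g) (con_rank r g) S T in hc.
  have le1 : k' <= k.
    have := kappa_le (con_rank r g) XsgS XsgE; rewrite -/k' /lambda /con_rank.
    have -> : g |: (Xs :\ g) = g |: Xs by sdec.
    have -> : g |: ((E :\ g) :\: (Xs :\ g)) = g |: (E :\: Xs) by sdec.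
    have -> : g |: (E :\ g) = E by sdec.
    have m1 : r [set g] <= r (g |: Xs) by apply: (rmono hM); [ssub | rewrite subUset sub1set gE].
    have m2 : r [set g] <= r (g |: (E :\: Xs)) by apply: (rmono hM); [ssub | rewrite subUset sub1set gE subsetDl].
    have m3 : r [set g] <= r E by apply: (rmono hM); rewrite ?sub1set.
    case: (boolP (g \in Xs)) => gX.
      have eX : g |: Xs = Xs by sdec.
      rewrite eX in m1 *; have := rU1 hM (subsetDl E Xs) gE; move=> hh h2; clear -m1 m2 m3 hh h2 Xsk ntXs; lia.
    have eX : g |: (E :\: Xs) = E :\: Xs by sdec.
    rewrite eX in m2 *; have := rU1 hM XsE gE; move=> hh h2; clear -m1 m2 m3 hh h2 Xsk ntXs; lia.
  have lt1 : k' < k by rewrite ltn_neqAle hc le1.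
  have [X [X1 X2 Xk]] := kappa_att (con_rank r g) hSc'.
  move: Xk; rewrite -/k' /lambda /con_rank => Xk.
  have gX : g \notin X by apply/negP=> /(subsetP X2); rewrite !inE eqxx /= andbF.
  have XE : X \subset E :\: T by ssub.
  have XE' : X \subset E by apply: subset_trans XE (subsetDl _ _).
  have gXE : g |: X \subset E :\: T by rewrite subUset sub1set !inE gT gE XE.
  have gXE' : g |: X \subset E by apply: subset_trans gXE (subsetDl _ _).
  have SgX : S \subset g |: X by apply: subset_trans X1 (subsetUr _ _).
  move: Xk.
  have -> : g |: ((E :\ g) :\: X) = E :\: X by sdec.
  have -> : g |: (E :\ g) = E by sdec.
  move=> Xk.
  have m1 : r [set g] <= r (g |: X) by apply: (rmono hM); [ssub | done].
  have m2 : r [set g] <= r (E :\: X) by apply: (rmono hM); [rewrite sub1set !inE gE gX | apply: subsetDl].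
  have m3 : r [set g] <= r E by apply: (rmono hM); rewrite ?sub1set.
  have m4 : r X <= r (g |: X) by apply: (rmono hM); [apply: subsetUr | done].
  have m5 : r (E :\: (g |: X)) <= r (E :\: X) by apply: (rmono hM); [apply: setDS; apply: subsetUr | apply: subsetDl].
  have l1 := lb X X1 XE; have l2 := lb _ SgX gXE.
  exists X; rewrite /kset X1 XE SgX gXE gX /=.
  move: l1 l2; rewrite /lambda -/k => l1 l2.
  apply/andP; split; apply/eqP; clear -Xk lt1 m1 m2 m3 m4 m5 l1 l2 rg1; lia.
set k' := kappa (E :\ g) r S T in hd.
have le1 : k' <= k.
  have := kappa_le r XsgS XsgE; rewrite -/k' /lambda.
  have -> : (E :\ g) :\: (Xs :\ g) = (E :\: Xs) :\ g by sdec.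
  have m1 : r (Xs :\ g) <= r Xs by apply: (rmono hM); [apply: subsetDl | done].
  have m2 : r ((E :\: Xs) :\ g) <= r (E :\: Xs) by apply: (rmono hM); [apply: subsetDl | apply: subsetDl].
  case: (boolP (g \in Xs)) => gX.
    have -> : (E :\: Xs) :\ g = E :\: Xs by sdec.
    have := rD1 hM XsE gX; move=> hh h2; clear -hh h2 m1 m2 Xsk ntXs; lia.
  have -> : Xs :\ g = Xs by sdec.
  have := rD1 hM (subsetDl E Xs) (B:=E :\: Xs) (g:=g); rewrite !inE gX gE => /(_ isT) hh h2; clear -hh h2 m1 m2 Xsk ntXs; lia.
have lt1 : k' < k by rewrite ltn_neqAle hd le1.
have [X [X1 X2 Xk]] := kappa_att r hSc'.
move: Xk; rewrite -/k' /lambda => Xk.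
have gX : g \notin X by apply/negP=> /(subsetP X2); rewrite !inE eqxx /= andbF.
have XE : X \subset E :\: T by ssub.
have XE' : X \subset E by apply: subset_trans XE (subsetDl _ _).
have gXE : g |: X \subset E :\: T by rewrite subUset sub1set !inE gT gE XE.
have gXE' : g |: X \subset E by apply: subset_trans gXE (subsetDl _ _).
have SgX : S \subset g |: X by apply: subset_trans X1 (subsetUr _ _).
move: Xk.
have -> : (E :\ g) :\: X = E :\: (g |: X) by sdec.
move=> Xk.
have m1 : r (E :\: X) <= (r (E :\: (g |: X))).+1.
  have -> : E :\: X = g |: (E :\: (g |: X)) by sdec.
  exact: rU1' hM (subsetDl _ _) gE.
have m2 : r (E :\ g) <= r E by apply: (rmono hM); [apply: subsetDl | done].
have m3 := rU1' hM XE' gE.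
have l1 := lb X X1 XE; have l2 := lb _ SgX gXE.
exists X; rewrite /kset X1 XE SgX gXE gX /=.
move: l1 l2; rewrite /lambda -/k => l1 l2.
apply/andP; split; apply/eqP; clear -Xk lt1 m1 m2 m3 l1 l2; lia.
Qed.


Lemma kset_UI U (E : {set U}) r (S T A B : {set U}) : is_matroid E r ->
  kset E r S T A -> kset E r S T B -> kset E r S T (A :|: B) && kset E r S T (A :&: B).
Proof.
move=> hM /and3P[A1 A2 /eqP Ak] /and3P[B1 B2 /eqP Bk].
have AE : A \subset E by apply: subset_trans A2 (subsetDl _ _).
have BE : B \subset E by apply: subset_trans B2 (subsetDl _ _).
have UE : A :|: B \subset E :\: T by rewrite subUset A2 B2.
have IE : A :&: B \subset E :\: T by apply: subset_trans (subsetIl _ _) A2.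
have SU : S \subset A :|: B by apply: subset_trans A1 (subsetUl _ _).
have SI : S \subset A :&: B by rewrite subsetI A1 B1.
have l1 := kappa_le r SU UE; have l2 := kappa_le r SI IE.
have s1 := rsub hM AE BE.
have s2 := rsub hM (subsetDl E A) (subsetDl E B).
have e1 : (E :\: A) :|: (E :\: B) = E :\: (A :&: B) by sdec.
have e2 : (E :\: A) :&: (E :\: B) = E :\: (A :|: B) by sdec.
rewrite e1 e2 in s2.
have n1 := NT hM (subset_trans UE (subsetDl _ _)).
have n2 := NT hM (subset_trans IE (subsetDl _ _)).
have n3 := NT hM AE; have n4 := NT hM BE.
move: Ak Bk l1 l2; rewrite /kset /lambda SU UE SI IE /= => Ak Bk l1 l2.
apply/andP; split; apply/eqP; clear -Ak Bk l1 l2 s1 s2 n1 n2 n3 n4; lia.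
Qed.

Lemma guts U (E : {set U}) r (A : {set U}) f : is_matroid E r -> A \subset E -> f \in A ->
  lambda E r (A :\ f) = lambda E r A ->
  f \in cl E r (A :\ f) :&: cl E r (E :\: A)
  \/ f \in cldual E r (A :\ f) :&: cldual E r (E :\: A).
Proof.
move=> hM AE fA; rewrite /lambda.
have fE : f \in E by apply: (subsetP AE).
have AfE : A :\ f \subset E by apply: subset_trans (subsetDl _ _) AE.
have e1 : f |: (A :\ f) = A by sdec.
have e2 : E :\: (A :\ f) = f |: (E :\: A) by sdec.
have e3 : E :\: (f |: (E :\: A)) = A :\ f by sdec.
have e4 : E :\: (E :\: A) = A by sdec.
rewrite e2 => hl.
have m1 : r (A :\ f) <= r A by apply: (rmono hM); [apply: subsetDl | done].
have m2 : r A <= (r (A :\ f)).+1 by have := rU1' hM AfE fE; rewrite e1.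
have m3 : r (E :\: A) <= r (f |: (E :\: A)) by apply: (rmono hM); [apply: subsetUr | rewrite subUset sub1set fE subsetDl].
have m4 : r (f |: (E :\: A)) <= (r (E :\: A)).+1 by exact: rU1' hM (subsetDl _ _) fE.
have n1 := NT hM AE; have n2 := NT hM AfE; rewrite e2 in n2.
have c1 := cardsD1 f A; rewrite fA in c1.
have c2 := cardsU1 f (E :\: A); rewrite !inE fA /= in c2.
case: (eqVneq (r A) (r (A :\ f))) => ha.
  left; rewrite /cl !inE fE e1 /=; apply/andP; split; apply/eqP.
    by [].
  clear -hl ha m3 m4 n1 n2; lia.
right; rewrite /cldual !inE fE /rdual e1 e3 e4 e2 /=; apply/andP; split; apply/eqP.
  clear -hl ha m1 m2 m3 m4 n1 n2 c1; lia.
clear -hl ha m1 m2 m3 m4 n1 n2 c2; lia.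
Qed.


Definition Dset U (E : {set U}) r (S T : {set U}) (g : U) : {set U} :=
  odflt set0 [pick X : {set U} | [&& kset E r S T X, g \in X &
     [forall Y : {set U}, (kset E r S T Y && (g \in Y)) ==> (X \subset Y)]]].

Lemma D_spec U (E : {set U}) r (S T : {set U}) g : is_matroid E r ->
  (exists X0 : {set U}, kset E r S T X0 && (g \in X0)) ->
  [/\ kset E r S T (Dset E r S T g), g \in Dset E r S T g &
      forall Y, kset E r S T Y -> g \in Y -> Dset E r S T g \subset Y].
Proof.
move=> hM [X0 hX0].
rewrite /Dset; case: pickP => [X /and3P[h1 h2 /forallP h3] | none] /=.
  by split=> // Y hY gY; have := h3 Y; rewrite hY gY.
exfalso.
case: (arg_minnP (P := fun X => kset E r S T X && (g \in X)) (fun X : {set U} => #|X|) hX0).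
move=> X /andP[kX gX] hmin.
have := none X; rewrite kX gX /= => /negP; apply.
apply/forallP=> Y; apply/implyP=> /andP[kY gY].
have /andP[_ kI] := kset_UI hM kX kY.
have := hmin (X :&: Y); rewrite kI inE gX gY => /(_ isT) hc.
have : X \subset X :&: Y by rewrite -(geq_leqif (subset_leqif_card (subsetIl X Y))).
by move/subset_trans; apply; apply: subsetIr.
Qed.

Lemma bigcup_kset U (E : {set U}) r (S T : {set U}) (I : finType) (P : pred I) (G : I -> {set U}) :
  is_matroid E r -> (forall i, P i -> kset E r S T (G i)) ->
  \bigcup_(i | P i) G i = set0 \/ kset E r S T (\bigcup_(i | P i) G i).
Proof.
move=> hM hG.
apply: (big_ind (fun X => X = set0 \/ kset E r S T X)).
- by left.
- move=> X Y [->|hX] [->|hY].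
  + by left; rewrite setU0.
  + by right; rewrite set0U.
  + by right; rewrite setU0.
  + by right; have /andP[] := kset_UI hM hX hY.
- by move=> i /hG; right.
Qed.


Theorem theorem3p4 (U : finType) (E : {set U}) (r : {set U} -> nat)
  (S T F : {set U}) :
  is_matroid E r ->
  S \subset E -> T \subset E -> [disjoint S & T] ->
  F \subset E :\: (S :|: T) ->
  (forall f, f \in F -> ~ flexible E r S T f) ->
  let k := kappa E r S T in
  let t := #|F| in
  exists (f : 'I_t -> U) (A : 'I_t -> {set U}),
    [/\ injective f /\ [set f i | i in 'I_t] = F,
        (forall i, [/\ S \subset A i, A i \subset E :\: T & lambda E r (A i) = k]),
        (forall i j : 'I_t, j = i.+1 :> nat -> A i \subset A j),
        (forall i, A i :&: F = [set f j | j in 'I_t & j <= i]) &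
        (forall i, f i \in cl E r (A i :\ f i) :&: cl E r (E :\: A i)
                \/ f i \in cldual E r (A i :\ f i) :&: cldual E r (E :\: A i))].
Proof.
move=> hM SE TE dST FE nf k t.
have hF g : g \in F -> [/\ g \in E, g \notin S & g \notin T].
  by move/(subsetP FE); rewrite !inE negb_or => /andP[/andP[-> ->] ->].
have wit g : g \in F -> exists X : {set U},
    [&& kset E r S T X, kset E r S T (g |: X) & g \notin X].
  by move=> gF; have [gE gS gT] := hF g gF; apply: witness => //; apply: nf.
pose D := Dset E r S T.
have Ds g : g \in F -> [/\ kset E r S T (D g), g \in D g &
      forall Y, kset E r S T Y -> g \in Y -> D g \subset Y].
  move=> gF; apply: D_spec => //; have [X /and3P[_ h _]] := wit g gF.
  by exists (g |: X); rewrite h setU11.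
have Dd g : g \in F -> kset E r S T (D g :\ g).
  move=> gF; have [X /and3P[kX kgX gX]] := wit g gF.
  have [kD gD mD] := Ds g gF.
  have sub := mD _ kgX (setU11 g X).
  have -> : D g :\ g = D g :&: X by clear -sub gX; sdec.
  by have /andP[] := kset_UI hM kD kX.
have strict g x : g \in F -> x \in F -> x \in D g -> x != g -> #|D x| < #|D g|.
  move=> gF xF xD xg.
  have [_ _ mx] := Ds x xF; have [_ gD _] := Ds g gF.
  have sub : D x \subset D g :\ g by apply: mx; [exact: Dd | rewrite !inE xg xD].
  have := subset_leq_card sub; have := cardsD1 g (D g); rewrite gD; lia.
pose leD := fun x y : U => #|D x| <= #|D y|.
pose st := Tuple (sort_tupleP leD (enum_tuple F)).
have sE : tval st = sort leD (enum F) by [].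
have ss : size (tval st) = t by rewrite sE size_sort -cardE.
have us : uniq (tval st) by rewrite sE sort_uniq enum_uniq.
have ms x : (x \in tval st) = (x \in F) by rewrite sE mem_sort mem_enum.
have srt : sorted leD (tval st) by rewrite sE; apply: sort_sorted => x y; apply: leq_total.
have fF i : tnth st i \in F by rewrite -ms mem_tnth.
have inj : injective (tnth st).
  move=> i j; rewrite (tnth_nth (tnth st i)) (tnth_nth (tnth st i) st j) => /eqP.
  by rewrite nth_uniq ?ss ?ltn_ord // => /eqP; apply: val_inj.
have img x : x \in F -> exists m, x = tnth st m.
  rewrite -ms => xs.
  have xi : index x (tval st) < t by rewrite -ss index_mem.
  exists (Ordinal xi); by rewrite (tnth_nth x) /= nth_index.
have ord (i j : 'I_t) : #|D (tnth st i)| < #|D (tnth st j)| -> i < j.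
  move=> h; rewrite ltnNge; apply/negP => ji.
  have jin : (j : nat) \in [pred n | n < size st] by rewrite inE ss ltn_ord.
  have iin : (i : nat) \in [pred n | n < size st] by rewrite inE ss ltn_ord.
  have := sorted_leq_nth (leT := leD) (fun y x z h1 h2 => leq_trans h1 h2) (fun x => leqnn _) (tnth st i) srt _ _ jin iin ji.
  rewrite /leD -(tnth_nth (tnth st i)) -(tnth_nth (tnth st i) st i).
  by rewrite leqNgt h.
pose A := fun i : 'I_t => \bigcup_(j : 'I_t | j <= i) D (tnth st j).
have inA i : tnth st i \in A i.
  by apply/bigcupP; exists i => //; have [_ ? _] := Ds _ (fF i).
have kA i : kset E r S T (A i).
  have := bigcup_kset (P := fun j : 'I_t => j <= i) (G := fun j => D (tnth st j)) (S := S) (T := T) hM.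
  case=> [j _|h|//]; first by have [] := Ds _ (fF j).
  by have := inA i; rewrite /A h inE.
have AE i : A i \subset E by have /and3P[_ h _] := kA i; apply: subset_trans h (subsetDl _ _).
exists (tnth st), A; split.
- split=> //; apply/setP=> x; apply/imsetP/idP => [[i _ ->] | /img [m ->]]; first exact: fF.
  by exists m.
- by move=> i; have /and3P[h1 h2 /eqP h3] := kA i; split.
- move=> i j hij; apply/bigcupsP=> m hm; apply: (bigcup_sup m); rewrite hij; exact: leqW.
- move=> i; apply/setP=> x; apply/idP/idP.
    rewrite inE => /andP[/bigcupP[j ji xD] xF]; have [m em] := img x xF.
    apply/imsetP; exists m; last by [].
    rewrite inE /=; case: (eqVneq m j) => [->//|mj].
    have : tnth st m != tnth st j by apply/eqP=> /inj /eqP; rewrite (negbTE mj).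
    move=> ne; have := strict _ _ (fF j) xF xD; rewrite em => /(_ ne) /ord hmj.
    exact: leq_trans (ltnW hmj) ji.
  case/imsetP=> j; rewrite inE /= => ji ->; rewrite inE fF andbT.
  by apply/bigcupP; exists j => //; have [] := Ds _ (fF j).
move=> i.
pose B := \bigcup_(j : 'I_t | j < i) D (tnth st j).
have eB : A i :\ tnth st i = B :|: (D (tnth st i) :\ tnth st i).
  apply/setP=> x; apply/idP/idP.
    rewrite !inE => /andP[xn /bigcupP[j ji xD]].
    case: (ltngtP j i) => [jl | jg | je].
      by apply/orP; left; apply/bigcupP; exists j.
      by move: ji; rewrite leqNgt jg.
    have ej : j = i by apply: val_inj.
    rewrite -ej in xn *; by rewrite xn xD orbT.
  rewrite !inE => /orP[/bigcupP[j ji xD] | /andP[xn xD]].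
    apply/andP; split; last by apply/bigcupP; exists j => //; apply: ltnW.
    apply/eqP=> ex; move: xD; rewrite ex => xD.
    have ne : tnth st i != tnth st j.
      by apply/eqP=> /inj ej; move: ji; rewrite ej ltnn.
    have := ord _ _ (strict _ _ (fF j) (fF i) xD ne).
    by rewrite ltnNge (ltnW ji).
  by rewrite xn; apply/bigcupP; exists i.
have kB : kset E r S T (A i :\ tnth st i).
  rewrite eB; have := Dd _ (fF i).
  have := bigcup_kset (P := fun j : 'I_t => j < i) (G := fun j => D (tnth st j)) (S := S) (T := T) hM.
  case=> [j _|h|hB hD]; first by have [] := Ds _ (fF j).
    by rewrite /B h set0U.
  by have /andP[] := kset_UI hM hB hD.
apply: guts => //.
move: kB (kA i) => /and3P[_ _ /eqP ->] /and3P[_ _ /eqP ->] //.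
Qed.
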